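(* In DP-EFB, for every trial $t$, define for $a\in\mathcal A$ $$\theta_t(a):=\frac{[a\in V(\sigma_t)]\,\eta\, d_t(a)}{\gamma\beta(a)+q_t(a)}$$ (taken to be $0$ when $a\notin V(\sigma_t)$). Then $$\psi_t(r)=\sum_{\sigma\in\mathcal S}\Big(\prod_{a\in\mathcal A(\sigma)}\pi_t(a)\Big)\exp\Big(-\sum_{a\in\mathcal A(\sigma)}\theta_t(a)\Big),$$ where $\prod_{a\in\mathcal A(\sigma)}\pi_t(a)=\Pr[\sigma_t=\sigma\mid\pi_t]$.
   Context: Game tree: $V$ is the node set of a finite rooted tree with root $r$ and leaf set $L$; $C(v)$ denotes the set of children of $v$ and $p(v)$ the parent of $v\neq r$. The internal nodes $V\setminus L$ are partitioned into a set $N$ of infosets and a set $\mathcal A$ of actions such that $r\in N$, $C(v)\subseteq\mathcal A$ and $|C(v)|>1$ for every $v\in N$, and $C(a)\subseteq N\cup L$ for every $a\in\mathcal A$. A loss function $\lambda:L\to[0,1]$ is fixed. A (pure) strategy is a map $\sigma:N\to V$ with $\sigma(v)\in C(v)$ for all $v\in N$; an environment is a map $\mu:\mathcal A\to V$ with $\mu(a)\in C(a)$ for all $a\in\mathcal A$. For a strategy $\sigma$, $V(\sigma)$ is the smallest subset of $V$ containing $r$, containing $\sigma(v)$ for every $v\in N\cap V(\sigma)$, and containing $C(a)$ for every $a\in\mathcal A\cap V(\sigma)$. The reduced strategy of $\sigma$ is the restriction of $\sigma$ to $N\cap V(\sigma)$ (with $V$ of it defined as $V(\sigma)$); $\mathcal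 S$ is the set of all reduced strategies. For $\sigma\in\mathcal S$ write $N(\sigma)=N\cap V(\sigma)$, $\mathcal A(\sigma)=\mathcal A\cap V(\sigma)$. Playing a pair $(\sigma,\mu)$, $\sigma\in\mathcal S$, $\mu$ an environment, traverses the root-to-leaf path starting at $r$, moving from $v\in N$ to $\sigma(v)$ and from $a\in\mathcal A$ to $\mu(a)$, stopping at a leaf $u$; the loss is $\Lambda(\sigma,\mu):=\lambda(u)$, and the last action on this path is called the last action encountered. Functions $n,m:N\cup\mathcal A\to\mathbb N$ are defined recursively from the bottom of the tree: for $a\in\mathcal A$, $n(a)=\prod_{v\in C(a)\cap N}n(v)$ and $m(a)=1+\sum_{v\in C(a)\cap N}m(v)$ (empty product $=1$, empty sum $=0$); for $v\in N$, $n(v)=\sum_{a\in C(v)}n(a)$ and $m(v)=\sum_{a\in C(v)}m(a)$. The function $\beta:N\cup\mathcal A\to\mathbb R$ is defined from the top: $\beta(r)=1$, $\beta(a)=m(a)\beta(p(a))$ for $a\in\mathcal A$, $\beta(v)=\beta(p(v))/m(v)$ for $v\in N\setminus\{r\}$. Algorithm DP-EFB (parameters $T$, $\epsilon\in(0,1)$): set $\eta:=\left(\left(\frac{6\ln T}{\epsilon}+\frac{9(e-2)}{\epsilon^2}\right)\frac{m(r)T}{\ln n(r)}\right)^{-1/2}$ and $\gamma:=6\ln(T)\eta/\epsilon$. A policy is a map $\pi:\mathcal A\to[0,1]$ with $\sum_{a\in C(v)}\pi(a)=1$ for all $v\in N$. Initially $\pi_1(a):=n(a)/n(p(a))$ for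 all $a\in\mathcal A$. For $a\in\mathcal A$, let $q_t(a)$ be the product of $\pi_t(a')$ over all actions $a'$ on the path from $r$ to $a$ (including $a$). Environments $\mu_1,\dots,\mu_T$ are fixed in advance. On each trial $t=1,\dots,T$: (i) the server samples $\sigma_t\in\mathcal S$ recursively: starting at $r$, at each visited infoset $v$ it draws $\sigma_t(v)\in C(v)$ with $\Pr[\sigma_t(v)=a]=\pi_t(a)$ independently, and then visits every $v'\in C(\sigma_t(v))\cap N$. (ii) $(\sigma_t,\mu_t)$ is played, giving loss $\ell_t:=\Lambda(\sigma_t,\mu_t)$; let $z_t$ be the last action encountered. (iii) For each $a\in\mathcal A(\sigma_t)$, independently draw $\phi_t(a)$ from the Laplace density $Q(x)=\frac{\epsilon}{4}\exp(-\frac{\epsilon}{2}|x|)$ and set $d_t(a):=[a=z_t]\,\ell_t+\phi_t(a)$ (where $[P]$ is $1$ if $P$ holds and $0$ otherwise); $d_t:\mathcal A(\sigma_t)\to\mathbb R$ is sent to the server. (iv) The server runs $\mathrm{Update}_t(r,1)$, where for $v\in N(\sigma_t)$ and $x>0$, $\mathrm{Update}_t(v,x)$ does: let $b:=\sigma_t(v)$; for each $v'\in C(b)\cap N$ run $\mathrm{Update}_t(v',\pi_t(b)x)$ and call its return value $\psi_t(v')$; set $\omega_t(v):=\exp\!\left(\frac{-\eta\, d_t(b)}{\gamma\beta(b)+\pi_t(b)x}\right)\prod_{v'\in C(b)\cap N}\psi_t(v')$; for all $a\in C(v)$ set $\pi_{t+1}(a):=\frac{[a=b]\,\omega_t(v)\pi_t(a)+[a\ne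 b]\,\pi_t(a)}{1-(1-\omega_t(v))\pi_t(b)}$; return $\psi_t(v):=1-(1-\omega_t(v))\pi_t(b)$. For every $v\in N\setminus N(\sigma_t)$, $\pi_{t+1}(a):=\pi_t(a)$ for all $a\in C(v)$. *)

(* Defs.v *)
From HB Require Import structures.
From mathcomp Require Import all_boot all_order all_algebra.
From mathcomp Require Import reals sequences exp.
Set Implicit Arguments. Unset Strict Implicit. Unset Printing Implicit Defensive.
Import Order.TTheory GRing.Theory Num.Theory.
Local Open Scope ring_scope.

(* Game trees.  Nodes form a finite type V, the tree is given by a     *)
(* parent map [par] (with par r = r) and the infoset set N; actions are  *)
(* the internal nodes that are not infosets.                           *)
Section Tree.
Variables (V : finType) (par : V -> V) (r : V) (N : {set V}).

Definition children (v : V) : {set V} := [set u | (u != r) && (par u == v)].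
Definition leaves : {set V} := [set v | children v == set0].
Definition actions : {set V} := [set v | (v \notin leaves) && (v \notin N)].

Definition is_game_tree : Prop :=
  [/\ par r = r,
      (forall v, exists k, iter k par v = r),
      r \in N,
      (forall v, v \in N -> (1 < #|children v|)%N /\ children v \subset actions)
    & (forall a, a \in actions -> children a \subset N :|: leaves)].

Definition closedb (g : V -> option V) (X : {set V}) : bool :=
  [&& r \in X,
      [forall v, (v \in N :&: X) ==> (if g v is Some w then w \in X else true)]
    & [forall a, (a \in actions :&: X) ==> (children a \subset X)]].
Definition Vof (g : V -> option V) : {set V} :=
  [set v | [forall X : {set V}, closedb g X ==> (v \in X)]].

Definition is_strategy (s : {ffun V -> V}) : bool :=
  [forall v, (v \in N) ==> (s v \in children v)].

(* reduced strategy: the restriction of s to N(s), as a partial map *)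
Definition reduce (s : {ffun V -> V}) : {ffun V -> option V} :=
  [ffun v => if v \in N :&: Vof (fun u => Some (s u)) then Some (s v) else None].

Definition reduced_strategies : {set {ffun V -> option V}} :=
  [set reduce s | s in [set s | is_strategy s]].

Definition Nof (rho : {ffun V -> option V}) : {set V} := N :&: Vof rho.
Definition Aof (rho : {ffun V -> option V}) : {set V} := actions :&: Vof rho.

(* n and m, defined bottom-up (fuel #|V| exceeds the height of the tree) *)
Fixpoint nF (k : nat) (v : V) : nat :=
  match k with
  | 0 => 1
  | k'.+1 => if v \in actions then \prod_(u in children v :&: N) nF k' u
             else \sum_(a in children v) nF k' a
  end.
Fixpoint mF (k : nat) (v : V) : nat :=
  match k with
  | 0 => 1
  | k'.+1 => if v \in actions then 1 + \sum_(u in children v :&: N) mF k' u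
             else \sum_(a in children v) mF k' a
  end.
Definition nfun (v : V) : nat := nF #|V| v.
Definition mfun (v : V) : nat := mF #|V| v.

Definition anc (v : V) : {set V} := [set u | [exists k : 'I_#|V|, iter k par v == u]].

Definition step (rho : {ffun V -> option V}) (mu : {ffun V -> V}) (v : V) : V :=
  if v \in N then odflt v (rho v) else if v \in actions then mu v else v.
Definition play_leaf rho mu : V := iter #|V| (step rho mu) r.
Definition last_action rho mu : V :=
  last r [seq u <- traject (step rho mu) r #|V|.+1 | u \in actions].

Section Reals.
Variable R : realType.

Fixpoint betaF (k : nat) (v : V) : R :=
  match k with
  | 0 => 1
  | k'.+1 => if v == r then 1
             else if v \in actions then (mfun v)%:R * betaF k' (par v)
             else betaF k' (par v) / (mfun v)%:R
  end.
Definition beta (v : V) : R := betaF #|V| v.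

Definition qpol (pi : V -> R) (a : V) : R := \prod_(a' in anc a :&: actions) pi a'.

(* Update_t.  [psiF] is the return value of Update(v, x). *)
Section Update.
Variables (pi : V -> R) (rho : {ffun V -> option V}) (d : V -> R) (eta gamma : R).

Definition bch (v : V) : V := odflt v (rho v).

Fixpoint psiF (k : nat) (v : V) (x : R) : R :=
  match k with
  | 0 => 1
  | k'.+1 =>
    1 - (1 - expR (- (eta * d (bch v)) / (gamma * beta (bch v) + pi (bch v) * x))
             * \prod_(u in children (bch v) :&: N) psiF k' u (pi (bch v) * x))
        * pi (bch v)
  end.

Definition omega (v : V) (x : R) : R :=
  expR (- (eta * d (bch v)) / (gamma * beta (bch v) + pi (bch v) * x))
  * \prod_(u in children (bch v) :&: N) psiF #|V| u (pi (bch v) * x).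

(* the argument x with which Update(v, .) is called (Update(r,1), and
   Update(v', pi(b) x) for v' in C(b), b = sigma(v)) *)
Fixpoint xF (k : nat) (v : V) : R :=
  match k with
  | 0 => 1
  | k'.+1 => if v == r then 1 else pi (par v) * xF k' (par (par v))
  end.
Definition xcall (v : V) : R := xF #|V| v.

Definition newpi (a : V) : R :=
  if (a \in actions) && (par a \in Nof rho) then
    let v := par a in
    let w := omega v (xcall v) in
    ((if a == bch v then w * pi a else pi a) / (1 - (1 - w) * pi (bch v)))
  else pi a.
End Update.

(* DP-EFB.  sig t = sampled reduced strategy sigma_t, mu t = environment *)
(* mu_t, phi t a = Laplace noise phi_t(a) (the identity is pointwise in *)
(* the sampled outcomes).                                              *)
Section DPEFB.
Variables (lam : V -> R) (T : nat) (eps : R).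
Variables (mu : nat -> {ffun V -> V}) (sig : nat -> {ffun V -> option V})
          (phi : nat -> V -> R).

Definition eta_dp : R :=
  powR (((6 * ln T%:R) / eps + 9 * (expR 1 - 2) / eps ^+ 2)
        * ((mfun r)%:R * T%:R) / ln (nfun r)%:R) (- 2^-1).
Definition gamma_dp : R := 6 * ln T%:R * eta_dp / eps.

Definition pi1 (a : V) : R := (nfun a)%:R / (nfun (par a))%:R.

Definition loss_t (t : nat) : R := lam (play_leaf (sig t) (mu t)).
Definition z_t (t : nat) : V := last_action (sig t) (mu t).
Definition d_t (t : nat) (a : V) : R :=
  (if a == z_t t then loss_t t else 0) + phi t a.

(* polF t = pi_{t+1} *)
Fixpoint polF (t : nat) : V -> R :=
  match t with
  | 0 => pi1
  | t'.+1 => newpi (polF t') (sig t'.+1) (d_t t'.+1) eta_dp gamma_dp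
  end.
Definition pi_t (t : nat) : V -> R := polF t.-1.

(* psi_t(r): return value of Update_t(r, 1) *)
Definition psi_root (t : nat) : R :=
  psiF (pi_t t) (sig t) (d_t t) eta_dp gamma_dp #|V|.+1 r 1.

Definition theta (t : nat) (a : V) : R :=
  if a \in Vof (sig t) then
    eta_dp * d_t t a / (gamma_dp * beta a + qpol (pi_t t) a)
  else 0.
End DPEFB.
End Reals.
End Tree.

(* Main.v *)
Require Import Defs.
From HB Require Import structures.
From mathcomp Require Import all_boot all_order all_algebra.
From mathcomp Require Import reals sequences exp.
From mathcomp Require Import zify ring lra.
Import Order.TTheory GRing.Theory Num.Theory.
Local Open Scope ring_scope.
Set Implicit Arguments. Unset Strict Implicit. Unset Printing Implicit Defensive.

Section TreeFacts.
Variables (V : finType) (par : V -> V) (r : V) (N : {set V}).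
Hypothesis Htree : is_game_tree par r N.
Local Notation C := (children par r).
Local Notation act := (actions par r N).
Local Notation lvs := (leaves par r).

Lemma par_r : par r = r. Proof. by case: Htree. Qed.
Lemma r_in_N : r \in N. Proof. by case: Htree. Qed.

Lemma reachb v : exists k, iter k par v == r.
Proof. by case: Htree => _ H _ _ _; have [k Hk] := H v; exists k; apply/eqP. Qed.

Definition dep v := ex_minn (reachb v).

Lemma iter_dep v : iter (dep v) par v = r.
Proof. by rewrite /dep; case: ex_minnP => k /eqP. Qed.

Lemma dep_min v k : iter k par v = r -> (dep v <= k)%N.
Proof. by rewrite /dep; case: ex_minnP => m _ H /eqP /H. Qed.

Lemma iter_r k : iter k par r = r.
Proof. by elim: k => //= k ->; rewrite par_r. Qed.

Lemma iter_ge v k : (dep v <= k)%N -> iter k par v = r.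
Proof. by move=> h; rewrite -(subnK h) iterD iter_dep iter_r. Qed.

Lemma dep_r : dep r = 0%N.
Proof. by apply/eqP; rewrite -leqn0; apply: dep_min. Qed.

Lemma dep_par v : dep (par v) = (dep v).-1.
Proof.
have [->|vr] := eqVneq v r; first by rewrite par_r dep_r.
have d1 : (0 < dep v)%N.
  by rewrite lt0n; apply/eqP => h; move: (iter_dep v); rewrite h /= => /eqP; rewrite (negPf vr).
apply/eqP; rewrite eqn_leq; apply/andP; split.
  by apply: dep_min; rewrite -iterSr prednK // iter_dep.
rewrite -ltnS prednK //; apply: dep_min; by rewrite iterSr iter_dep.
Qed.

Lemma dep_lt v : (dep v < #|V|)%N.
Proof.
pose f (i : 'I_(dep v).+1) := iter i par v.
have inj : injective f.
  move=> i j; rewrite /f => eq_ij; apply/val_inj => /=.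
  wlog lt : i j eq_ij / (i < j)%N.
    move=> W; case: (ltngtP i j) => h; [exact: W | by apply/esym/W | by []].
  exfalso.
  have hj := ltn_ord j.
  have : iter (dep v - j + i) par v = r.
    by rewrite iterD eq_ij -iterD subnK ?iter_dep // -ltnS.
  move/dep_min; rewrite -ltnS in hj; lia.
by have := leq_card f inj; rewrite card_ord.
Qed.


Lemma dep_iter v k : dep (iter k par v) = (dep v - k)%N.
Proof. elim: k => [|k IH]; first by rewrite subn0. by rewrite iterS dep_par IH subnS. Qed.

Local Notation anc := (anc par).

Lemma ancP u v : reflect (exists k, iter k par v = u) (u \in anc v).
Proof.
rewrite /Defs.anc inE; apply: (iffP existsP) => [[k /eqP <-]|[k <-]]; first by exists k.
have [lt|ge] := ltnP k #|V|; first by exists (Ordinal lt).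
exists (Ordinal (dep_lt v)) => /=; rewrite iter_dep iter_ge //.
by apply: leq_trans (ltnW (dep_lt v)) ge.
Qed.

Lemma anc_self v : v \in anc v. Proof. by apply/ancP; exists 0%N. Qed.
Lemma anc_root v : r \in anc v. Proof. by apply/ancP; exists (dep v); rewrite iter_dep. Qed.
Lemma anc_r : anc r = [set r].
Proof.
apply/setP => u; rewrite inE; apply/idP/idP => [/ancP[k <-]|/eqP->]; last exact: anc_self.
by rewrite iter_r.
Qed.
Lemma anc_par v : v != r -> anc v = v |: anc (par v).
Proof.
move=> _; apply/setP => u; rewrite in_setU1; apply/ancP/orP => [[[|k] <-]|[/eqP->|/ancP[k <-]]].
- by left.
- by right; apply/ancP; exists k; rewrite iterSr.
- by exists 0%N.
- by exists k.+1; rewrite iterSr.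
Qed.
Lemma anc_par_sub v : anc (par v) \subset anc v.
Proof. by apply/subsetP => u /ancP[k <-]; apply/ancP; exists k.+1; rewrite iterSr. Qed.
Lemma anc_trans u w v : u \in anc w -> w \in anc v -> u \in anc v.
Proof. by move=> /ancP[k <-] /ancP[j <-]; apply/ancP; exists (k + j)%N; rewrite iterD. Qed.
Lemma anc_dep u v : u \in anc v -> u = iter (dep v - dep u) par v.
Proof.
move=> /ancP[k <-]; rewrite dep_iter.
have [le|lt] := leqP k (dep v); first by rewrite subKn.
by rewrite (iter_ge (ltnW lt)) (_ : (dep v - k = 0)%N) ?subn0 ?iter_dep //; lia.
Qed.
Lemma anc_dep_le u v : u \in anc v -> (dep u <= dep v)%N.
Proof. by move=> /ancP[k <-]; rewrite dep_iter leq_subr. Qed.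
Lemma anc_eq u v : u \in anc v -> dep u = dep v -> u = v.
Proof. by move=> h e; rewrite (anc_dep h) e subnn. Qed.

Lemma childE c v : (c \in C v) = (c != r) && (par c == v).
Proof. by rewrite /children inE. Qed.
Lemma dep_child c v : c \in C v -> dep c = (dep v).+1.
Proof.
rewrite childE => /andP[cr /eqP <-]; rewrite dep_par prednK // lt0n.
apply/eqP => h; move: (iter_dep c); rewrite h /= => /eqP; by rewrite (negPf cr).
Qed.
Lemma par_in_anc v : par v \in anc v. Proof. by apply/ancP; exists 1%N. Qed.

Definition Sub v := [set w | v \in anc w].
Lemma SubE w v : (w \in Sub v) = (v \in anc w). Proof. by rewrite /Sub inE. Qed.
Lemma Sub_self v : v \in Sub v. Proof. by rewrite SubE anc_self. Qed.
Lemma Sub_child c v : c \in C v -> Sub c \subset Sub v.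
Proof.
move=> hc; apply/subsetP => w; rewrite !SubE => h; apply: (anc_trans _ h).
by move: hc; rewrite childE => /andP[_ /eqP <-]; apply: par_in_anc.
Qed.
Lemma notin_Sub_child c v : c \in C v -> v \notin Sub c.
Proof. by move=> hc; rewrite SubE; apply/negP => /anc_dep_le; rewrite (dep_child hc) ltnn. Qed.
Lemma Sub_disj c1 c2 w : dep c1 = dep c2 -> w \in Sub c1 -> w \in Sub c2 -> c1 = c2.
Proof. by move=> e; rewrite !SubE => /anc_dep h1 /anc_dep h2; rewrite h1 h2 e. Qed.

Lemma Sub_dec v : Sub v = v |: \bigcup_(c in C v) Sub c.
Proof.
apply/setP => w; rewrite in_setU1 SubE; apply/idP/orP.
  move=> hv; have [->|wv] := eqVneq w v; first by left.
  right; apply/bigcupP.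
  have e := anc_dep hv; have le := anc_dep_le hv.
  have kpos : (0 < dep w - dep v)%N.
    rewrite subn_gt0 ltn_neqAle le andbT; apply/eqP => h.
    by move: e; rewrite h subnn /= => /esym; apply/eqP.
  exists (iter (dep w - dep v).-1 par w).
    rewrite childE -iterS prednK // -e eqxx andbT; apply/eqP => h.
    have := dep_iter w (dep w - dep v).-1; rewrite h dep_r; lia.
  by rewrite SubE; apply/ancP; eexists.
case => [/eqP ->|/bigcupP[c hc]]; first exact: anc_self.
by move/(subsetP (Sub_child hc)); rewrite SubE.
Qed.

Lemma tree_sum (R : nmodType) (f : V -> R) v :
  \sum_(w in Sub v) f w = f v + \sum_(c in C v) \sum_(w in Sub c) f w.
Proof.
rewrite Sub_dec big_setU1 /=; last first.
  by apply/bigcupP => -[c hc]; apply/negP; exact: notin_Sub_child.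
congr (_ + _).
rewrite (_ : \bigcup_(c in C v) Sub c = \bigcup_c (if c \in C v then Sub c else set0)); last first.
  by rewrite [LHS]big_mkcond /=.
rewrite partition_disjoint_bigcup; last first.
  move=> i j ij; rewrite -setI_eq0; apply/eqP/setP => w; rewrite in_setI in_set0.
  case: ifP => hi; case: ifP => hj; rewrite ?in_set0 ?andbF //.
  apply/negP => /andP[wi wj]; move/eqP: ij; apply.
  by apply: (Sub_disj _ wi wj); rewrite (dep_child hi) (dep_child hj).
rewrite [RHS]big_mkcond /=; apply: eq_bigr => c _; case: ifP => // _; exact: big_set0.
Qed.


Lemma HN v : v \in N -> (1 < #|C v|)%N /\ C v \subset act. Proof. by case: Htree => _ _ _ H _; apply: H. Qed.
Lemma HA a : a \in act -> C a \subset N :|: lvs. Proof. by case: Htree => _ _ _ _ H; apply: H. Qed.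
Lemma actE a : (a \in act) = (a \notin lvs) && (a \notin N). Proof. by rewrite /actions inE. Qed.
Lemma leafE v : (v \in lvs) = (C v == set0). Proof. by rewrite /leaves inE. Qed.
Lemma N_not_act v : v \in N -> v \notin act. Proof. by move=> h; rewrite actE h andbF. Qed.
Lemma N_not_leaf v : v \in N -> v \notin lvs.
Proof. move=> /HN[h _]; rewrite leafE; apply/negP => /eqP e; by rewrite e cards0 in h. Qed.
Lemma child_N c v : v \in N -> c \in C v -> c \in act.
Proof. by move=> /HN[_ /subsetP h] /h. Qed.
Lemma child_A a c : a \in act -> c \in C a -> (c \in N) || (c \in lvs).
Proof. by move=> /HA /subsetP h /h; rewrite in_setU. Qed.
Lemma act_ne_r a : a \in act -> a != r.
Proof. by move=> h; apply/eqP => e; move: h; rewrite e (negPf (N_not_act r_in_N)). Qed.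
Lemma in_C_par c : c != r -> c \in C (par c). Proof. by move=> h; rewrite childE h eqxx. Qed.
Lemma par_not_leaf c : c != r -> par c \notin lvs.
Proof. by move=> /in_C_par h; rewrite leafE; apply/set0Pn; exists c. Qed.
Lemma leaf_not_act v : v \in lvs -> v \notin act. Proof. by move=> h; rewrite actE h. Qed.
Lemma par_act a : a \in act -> par a \in N.
Proof.
move=> ha; have ar := act_ne_r ha.
have [pa|pna] := boolP (par a \in act).
  by have := child_A pa (in_C_par ar); move: ha; rewrite actE => /andP[/negPf -> /negPf ->].
by move: pna; rewrite actE (negPf (par_not_leaf ar)) /= negbK.
Qed.
Lemma par_N v : v \in N -> v != r -> par v \in act.
Proof.
move=> hv vr; rewrite actE par_not_leaf //=; apply/negP => h.
by move: (child_N h (in_C_par vr)); rewrite (negPf (N_not_act hv)).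
Qed.
Lemma leaf_C v : v \in lvs -> C v = set0. Proof. by rewrite leafE => /eqP. Qed.
Lemma childP c v : c \in C v -> par c = v. Proof. by rewrite childE => /andP[_ /eqP]. Qed.
Lemma child_ne_r c v : c \in C v -> c != r. Proof. by rewrite childE => /andP[]. Qed.

Local Notation Vof := (Vof par r N).
Lemma closedbP (g : V -> option V) (X : {set V}) :
  r \in X -> (forall v w, v \in N -> v \in X -> g v = Some w -> w \in X) ->
  (forall a c, a \in act -> a \in X -> c \in C a -> c \in X) -> closedb par r N g X.
Proof.
move=> h1 h2 h3; rewrite /closedb h1 /=; apply/andP; split; apply/forallP => v; apply/implyP;
  rewrite in_setI => /andP[hv hX].
  by case e: (g v) => [w|] //; apply: h2 e.
by apply/subsetP => c; apply: h3.
Qed.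
Lemma Vof_min g (X : {set V}) : closedb par r N g X -> Vof g \subset X.
Proof. by move=> cX; apply/subsetP => v; rewrite /Defs.Vof inE => /forallP/(_ X)/implyP; apply. Qed.
Lemma Vof_r g : r \in Vof g.
Proof. by rewrite /Defs.Vof inE; apply/forallP => X; apply/implyP => /andP[]. Qed.
Lemma Vof_N g v w : v \in N -> v \in Vof g -> g v = Some w -> w \in Vof g.
Proof.
move=> hN hv e; rewrite /Defs.Vof inE; apply/forallP => X; apply/implyP => cX.
have := forallP (proj1 (andP (proj2 (andP cX)))) v; rewrite in_setI hN e /=; move=> /implyP; apply.
by move: hv; rewrite /Defs.Vof inE => /forallP/(_ X)/implyP; apply.
Qed.
Lemma Vof_A g a c : a \in act -> a \in Vof g -> c \in C a -> c \in Vof g.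
Proof.
move=> hA hv hc; rewrite /Defs.Vof inE; apply/forallP => X; apply/implyP => cX.
have := forallP (proj2 (andP (proj2 (andP cX)))) a; rewrite in_setI hA /=.
move=> /implyP h; apply: (subsetP (h _)) hc.
by move: hv; rewrite /Defs.Vof inE => /forallP/(_ X)/implyP; apply.
Qed.

Definition goodg (g : V -> option V) := forall v w, v \in N -> g v = Some w -> w \in C v.

Lemma Vof_par g w : goodg g -> w \in Vof g -> w != r ->
  par w \in Vof g /\ (par w \in N -> g (par w) = Some w).
Proof.
move=> gg hw wr.
pose Y := Vof g :&: [set w | (w == r) || ((par w \in Vof g) && ((par w \in N) ==> (g (par w) == Some w)))].
have : Vof g \subset Y.
  apply: Vof_min; apply: closedbP.
  - by rewrite in_setI Vof_r inE eqxx.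
  - move=> v x hN; rewrite in_setI => /andP[hv _] e.
    have hx := gg _ _ hN e; rewrite in_setI (Vof_N hN hv e) inE /= (childP hx) hv hN e eqxx.
    by rewrite orbT.
  - move=> a c hA; rewrite in_setI => /andP[ha _] hc.
    rewrite in_setI (Vof_A hA ha hc) inE (childP hc) ha.
    have aN : a \notin N by move: hA; rewrite actE => /andP[].
    by rewrite (negPf aN) orbT.
move=> /subsetP /(_ _ hw); rewrite in_setI inE (negPf wr) /= => /andP[_ /andP[h1 /implyP h2]].
by split => // /h2 /eqP.
Qed.

Lemma Vof_anc g w u : goodg g -> w \in Vof g -> u \in anc w -> u \in Vof g.
Proof.
move=> gg hw /ancP[k <-]; elim: k => // k IH; rewrite iterS.
have [e|ne] := eqVneq (iter k par w) r; first by rewrite e par_r Vof_r.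
exact: (Vof_par gg IH ne).1.
Qed.


Definition Fam (D : {set V}) : {set {ffun V -> V}} :=
  [set s : {ffun V -> V} | [forall w, if w \in D then s w \in C w else s w == r]].
Local Notation P0 := (Fam N).
Lemma FamP (s : {ffun V -> V}) (D : {set V}) : reflect (forall w, if w \in D then is_true (s w \in C w) else s w = r) (s \in Fam D).
Proof.
rewrite /Fam inE; apply: (iffP forallP) => h w; have := h w; by case: ifP => // _ /eqP.
Qed.
Lemma P0_C (s : {ffun V -> V}) v : s \in P0 -> v \in N -> s v \in C v.
Proof. by move=> /FamP /(_ v) + hv; rewrite hv. Qed.

Local Notation gS s := (fun u => Some (s u)).
Lemma goodS (s : {ffun V -> V}) : s \in P0 -> goodg (gS s).
Proof. by move=> hs v w hv [<-]; apply: P0_C. Qed.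

Lemma Vof_reduce (s : {ffun V -> V}) : Vof (reduce par r N s) = Vof (gS s).
Proof.
have sub1 : Vof (reduce par r N s) \subset Vof (gS s).
  apply: Vof_min; apply: closedbP; first exact: Vof_r.
  - move=> v w hv hX; rewrite /reduce ffunE in_setI hv hX => -[<-]; exact: Vof_N hX _.
  - by move=> a c hA hX hc; apply: Vof_A hc.
apply/eqP; rewrite eqEsubset sub1 /=.
apply: Vof_min; apply: closedbP; first exact: Vof_r.
- move=> v w hv hX [<-]; apply: (Vof_N (g := reduce par r N s) hv hX).
  by rewrite /reduce ffunE in_setI hv (subsetP sub1 _ hX).
- by move=> a c hA hX hc; apply: Vof_A hc.
Qed.

Lemma Vof_agree (s s' : {ffun V -> V}) : (forall v, v \in N -> v \in Vof (gS s) -> s v = s' v) ->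
  Vof (gS s') = Vof (gS s).
Proof.
move=> h.
have sub1 : Vof (gS s') \subset Vof (gS s).
  apply: Vof_min; apply: closedbP; first exact: Vof_r.
  - by move=> v w hv hX [<-]; rewrite -h //; exact: Vof_N hX _.
  - by move=> a c hA hX hc; apply: Vof_A hc.
apply/eqP; rewrite eqEsubset sub1 /=.
apply: Vof_min; apply: closedbP; first exact: Vof_r.
- move=> v w hv hX [<-]; rewrite h //; last exact: (subsetP sub1).
  exact: Vof_N hX _.
- by move=> a c hA hX hc; apply: Vof_A hc.
Qed.

Lemma reduce_val (s : {ffun V -> V}) v : v \in N -> v \in Vof (gS s) -> reduce par r N s v = Some (s v).
Proof. by move=> hv hX; rewrite /reduce ffunE in_setI hv hX. Qed.

Lemma reduce_eqP (s s' : {ffun V -> V}) : reduce par r N s = reduce par r N s' <->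
  (forall v, v \in N -> v \in Vof (gS s) -> s v = s' v).
Proof.
split=> [e v hv hX|h].
  have hX' : v \in Vof (gS s') by rewrite -Vof_reduce -e Vof_reduce.
  by have := reduce_val hv hX; rewrite e reduce_val // => -[].
apply/ffunP => v; rewrite /reduce !ffunE (Vof_agree h) !in_setI.
by case: (boolP (v \in N)) => //= hv; case: ifP => // hX; rewrite h.
Qed.

Lemma S_eq : reduced_strategies par r N = reduce par r N @: P0.
Proof.
apply/setP => rho; apply/imsetP/imsetP => -[s hs ->].
  pose s' := [ffun v => if v \in N then s v else r].
  exists s'.
    apply/FamP => w; rewrite ffunE; case: ifP => hw; rewrite hw //.
    by move: hs; rewrite inE => /forallP/(_ w); rewrite hw.
  by apply: (proj2 (reduce_eqP _ _)) => v hv _; rewrite ffunE hv.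
exists s => //; rewrite inE; apply/forallP => w; apply/implyP => hw; exact: P0_C.
Qed.

Lemma Aof_reduce (s : {ffun V -> V}) : Aof par r N (reduce par r N s) = act :&: Vof (gS s).
Proof. by rewrite /Aof Vof_reduce. Qed.
Lemma Nof_reduce (s : {ffun V -> V}) : Nof par r N (reduce par r N s) = N :&: Vof (gS s).
Proof. by rewrite /Nof Vof_reduce. Qed.


Definition merge (A : {set V}) (s1 s2 : {ffun V -> V}) : {ffun V -> V} :=
  [ffun w => if w \in A then s1 w else s2 w].

Lemma Fam_split (R : nmodType) (D A : {set V}) (F : {ffun V -> V} -> R) :
  \sum_(s in Fam D) F s =
  \sum_(s1 in Fam (D :&: A)) \sum_(s2 in Fam (D :\: A)) F (merge A s1 s2).
Proof.
rewrite pair_big_dep /=.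
pose spl (s : {ffun V -> V}) := ([ffun w => if w \in A then s w else r],
                                  [ffun w => if w \in A then r else s w]).
rewrite (reindex_onto (fun p => merge A p.1 p.2) spl); last first.
  by move=> s _; apply/ffunP => w; rewrite /merge /spl /= !ffunE; case: (w \in A).
apply: eq_bigl => -[p1 p2] /=.
apply/andP/andP => [[/FamP hm /eqP [e1 e2]]|[/FamP h1 /FamP h2]].
  have h1 w : w \notin A -> p1 w = r by move=> hw; rewrite -e1 ffunE (negPf hw).
  have h2 w : w \in A -> p2 w = r by move=> hw; rewrite -e2 ffunE hw.
  split; apply/FamP => w; have := hm w; rewrite !ffunE !inE.
    by case: (boolP (w \in A)) => hA; rewrite ?andbT ?andbF //= ?h1 //; case: ifP.
  by case: (boolP (w \in A)) => hA; rewrite ?andbT ?andbF //= ?h2 //; case: ifP.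
split.
  apply/FamP => w; rewrite ffunE; have := h1 w; have := h2 w; rewrite !inE.
  by case: (w \in A); case: (w \in D).
apply/eqP; congr pair; apply/ffunP => w; rewrite /merge !ffunE;
  case: (boolP (w \in A)) => hA //.
  by have := h1 w; rewrite in_setI (negPf hA) andbF => ->.
by have := h2 w; rewrite in_setD hA /= => ->.
Qed.

Section Expect.
Variables (R : realType) (pi : V -> R).

Definition ED (D : {set V}) (F : {ffun V -> V} -> R) :=
  \sum_(s in Fam D) (\prod_(w in D) pi (s w)) * F s.

Lemma famQ (D : {set V}) (Q : V -> {set V}) : (forall w, w \in D -> Q w \subset C w) ->
  \sum_(s in Fam D | [forall w in D, s w \in Q w]) \prod_(w in D) pi (s w) =
  \prod_(w in D) \sum_(a in Q w) pi a.
Proof.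
move=> hQ; rewrite (big_distr_big_dep r) /=; apply: eq_bigl => s.
apply/andP/pfamilyP => [[/FamP h1 /forallP h2]|[/subsetP hs hin]].
  split.
    apply/subsetP => x; rewrite inE; have := h1 x; case: ifP => // _ ->.
    by rewrite eqxx.
  by move=> x hx; have := h2 x; rewrite hx.
split.
  apply/FamP => w; case: ifP => hw.
    exact: (subsetP (hQ _ hw)) (hin _ hw).
  by apply/eqP; apply: contraFT hw => h; apply: hs; rewrite inE.
by apply/forallP => w; apply/implyP => hw; apply: hin.
Qed.

Hypothesis pisum : forall v, v \in N -> \sum_(a in C v) pi a = 1.

Lemma ED1 (D : {set V}) : D \subset N -> ED D (fun=> 1) = 1.
Proof.
move=> hD; rewrite /ED; under eq_bigr do rewrite mulr1.
rewrite -(eq_bigl _ _ (fun s => andbT (s \in Fam D))).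
rewrite (eq_bigl (fun s => (s \in Fam D) && [forall w in D, s w \in C w])); last first.
  move=> s; case: (boolP (s \in Fam D)) => //= /FamP h; apply/esym/forallP => w.
  by apply/implyP => hw; have := h w; rewrite hw.
rewrite famQ // ?big1 // => w hw; first exact: pisum (subsetP hD _ hw).
Qed.

Lemma ED_split (D A : {set V}) (g h : {ffun V -> V} -> R) :
  (forall s s' : {ffun V -> V}, (forall w, w \in A -> s w = s' w) -> g s = g s') ->
  (forall s s' : {ffun V -> V}, (forall w, w \notin A -> s w = s' w) -> h s = h s') ->
  ED D (fun s => g s * h s) = ED (D :&: A) g * ED (D :\: A) h.
Proof.
move=> hg hh; rewrite /ED (Fam_split D A) big_distrlr /=.
apply: eq_bigr => s1 _; apply: eq_bigr => s2 _.
rewrite (bigID (mem A)) /=.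
rewrite (hg (merge A s1 s2) s1); last by move=> w hw; rewrite ffunE hw.
rewrite (hh (merge A s1 s2) s2); last by move=> w hw; rewrite ffunE (negPf hw).
have e1 : \prod_(i | mem (D :&: A) i) pi (merge A s1 s2 i) = \prod_(w in D :&: A) pi (s1 w).
  by apply: eq_bigr => w /setIP[_ hw]; rewrite ffunE hw.
have e2 : \prod_(i in D | i \notin A) pi (merge A s1 s2 i) = \prod_(w in D :\: A) pi (s2 w).
  rewrite (eq_bigl (mem (D :\: A))); last by move=> w; rewrite !inE andbC.
  by apply: eq_bigr => w /setDP[_ hw]; rewrite ffunE (negPf hw).
rewrite (eq_bigl (mem (D :&: A))); last by move=> w; rewrite !inE.
rewrite e1 e2; by rewrite -!mulrA; congr (_ * _); rewrite mulrCA.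
Qed.

Lemma ED_indep (A : {set V}) (g h : {ffun V -> V} -> R) :
  (forall s s' : {ffun V -> V}, (forall w, w \in A -> s w = s' w) -> g s = g s') ->
  (forall s s' : {ffun V -> V}, (forall w, w \notin A -> s w = s' w) -> h s = h s') ->
  ED N (fun s => g s * h s) = ED N g * ED N h.
Proof.
move=> hg hh; rewrite (ED_split _ hg hh).
have e1 : ED N g = ED (N :&: A) g.
  have -> : ED N g = ED N (fun s => g s * (fun=> 1) s) by apply: eq_bigr => s _; rewrite mulr1.
  rewrite (ED_split (h := fun=> 1) _ hg) //.
  by rewrite ED1 ?mulr1 // subsetDl.
have e2 : ED N h = ED (N :\: A) h.
  have -> : ED N h = ED N (fun s => (fun=> 1) s * h s) by apply: eq_bigr => s _; rewrite mul1r.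
  rewrite (ED_split (g := fun=> 1) _ _ hh) //.
  by rewrite ED1 ?mul1r // subsetIl.
by rewrite e1 e2.
Qed.

Definition dep_on (A : {set V}) (F : {ffun V -> V} -> R) :=
  forall s s' : {ffun V -> V}, (forall w, w \in A -> s w = s' w) -> F s = F s'.

Lemma ED_add (F G : {ffun V -> V} -> R) : ED N (fun s => F s + G s) = ED N F + ED N G.
Proof. by rewrite /ED -big_split /=; apply: eq_bigr => s _; rewrite mulrDr. Qed.
Lemma ED_scale c (F : {ffun V -> V} -> R) : ED N (fun s => c * F s) = c * ED N F.
Proof. by rewrite /ED big_distrr /=; apply: eq_bigr => s _; rewrite mulrCA. Qed.
Lemma ED_ext (F G : {ffun V -> V} -> R) : (forall s, F s = G s) -> ED N F = ED N G.
Proof. by move=> h; apply: eq_bigr => s _; rewrite h. Qed.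
Lemma ED_const c : ED N (fun=> c) = c.
Proof.
rewrite (ED_ext (G := fun s => c * (fun=> 1) s)); last by move=> s; rewrite mulr1.
by rewrite ED_scale ED1 ?mulr1.
Qed.

Lemma ED_ind v b : v \in N -> b \in C v -> ED N (fun s => if s v == b then 1 else 0) = pi b.
Proof.
move=> hv hb; rewrite /ED.
rewrite (eq_bigr (fun s : {ffun V -> V} => if s v == b then \prod_(w in N) pi (s w) else 0)); last first.
  by move=> s _; case: ifP; rewrite ?mulr1 ?mulr0.
rewrite -big_mkcondr /=.
pose Q w := if w == v then [set b] else C w.
rewrite (eq_bigl (fun s : {ffun V -> V} => (s \in Fam N) && [forall w in N, s w \in Q w])); last first.
  move=> s; case: (boolP (s \in Fam N)) => //= /FamP hs.
  apply/eqP/forallP => [e w|h]; last first.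
    by have := h v; rewrite hv /Q eqxx inE => /eqP.
  apply/implyP => hw; rewrite /Q; case: ifP => [/eqP ->|_]; first by rewrite inE e.
  by have := hs w; rewrite hw.
rewrite famQ; last first.
  by move=> w hw; rewrite /Q; case: ifP => [/eqP ->|_]; rewrite ?sub1set.
rewrite (bigD1 v) //= [X in _ * X]big1 ?mulr1; first by rewrite /Q eqxx big_set1.
by move=> w /andP[hw wv]; rewrite /Q (negPf wv) pisum.
Qed.

Lemma ED_prod (l : seq V) (g : V -> {ffun V -> V} -> R) :
  uniq l -> (forall u, u \in l -> dep_on (Sub u) (g u)) ->
  (forall u u', u \in l -> u' \in l -> u != u' -> [disjoint Sub u & Sub u']) ->
  ED N (fun s => \prod_(u <- l) g u s) = \prod_(u <- l) ED N (g u).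
Proof.
elim: l => [|u l IH] /= .
  by move=> _ _ _; rewrite big_nil (ED_ext (G := fun=> 1)) ?ED_const // => s; rewrite big_nil.
move=> /andP[ul ul'] hdep hdis.
rewrite big_cons (ED_ext (G := fun s => g u s * \prod_(u0 <- l) g u0 s)); last first.
  by move=> s; rewrite big_cons.
rewrite (ED_indep (A := Sub u)); first last.
- move=> s s' hs; apply: eq_big_seq => u' hu'.
  have hd : dep_on (Sub u') (g u') by apply: hdep; rewrite inE hu' orbT.
  apply: hd => w hw; apply: hs; apply/negP => hw'.
  have hne : u != u' by apply: contraNneq ul => ->.
  have hd' : [disjoint Sub u & Sub u'].
    by apply: hdis hne; rewrite ?inE ?hu' ?orbT ?eqxx.
  by have := disjointFl hd' hw; rewrite hw'.
- by apply: hdep; exact: mem_head.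
rewrite IH //.
- by move=> u' hu'; apply: hdep; rewrite inE hu' orbT.
- by move=> a b ha hb; apply: hdis; rewrite inE (ha, hb) orbT.
Qed.

End Expect.


Section QpolFacts.
Variables (R : realType) (pi : V -> R).
Lemma qpol_r : qpol par r N pi r = 1.
Proof.
rewrite /qpol anc_r (_ : [set r] :&: act = set0) ?big_set0 //.
apply/setP => w; rewrite in_setI in_set1 in_set0; apply/negP => /andP[/eqP -> h].
by move: (act_ne_r h); rewrite eqxx.
Qed.
Lemma qpol_child c v : c \in C v ->
  qpol par r N pi c = (if c \in act then pi c else 1) * qpol par r N pi v.
Proof.
move=> hc; rewrite /qpol anc_par ?(child_ne_r hc) // (childP hc).
have cn : c \notin anc v by apply/negP => /anc_dep_le; rewrite (dep_child hc) ltnn.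
case: ifP => hA.
  rewrite setIUl (_ : [set c] :&: act = [set c]); last first.
    by apply/setP => w; rewrite in_setI in_set1; case: eqP => // ->.
  by rewrite big_setU1 //= in_setI negb_and cn.
rewrite mul1r setIUl (_ : [set c] :&: act = set0) ?set0U //.
by apply/setP => w; rewrite in_setI in_set1 in_set0; case: eqP => // ->; rewrite hA.
Qed.
End QpolFacts.

Section Main.
Variables (R : realType) (pi : V -> R) (st : {ffun V -> V}) (th : V -> R).
Hypothesis hst : st \in P0.
Local Notation X := (Vof (gS st)).

Fixpoint Phi (k : nat) (v : V) (s : {ffun V -> V}) : R :=
  match k with
  | 0 => 1
  | k'.+1 => if s v == st v then expR (- th (st v)) * \prod_(u in C (st v) :&: N) Phi k' u s
             else 1
  end.

Lemma Phi_dep k v : v \in N -> dep_on (Sub v) (Phi k v).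
Proof.
elim: k v => [//|k IH] v hv s s' hs /=.
rewrite hs ?Sub_self //; case: ifP => // _; congr (_ * _).
apply: eq_bigr => u /setIP[hu huN]; apply: IH => // w hw; apply: hs.
apply: (subsetP (Sub_child (P0_C hst hv))); exact: (subsetP (Sub_child hu)).
Qed.

Lemma st_X_child v : v \in N -> v \in X -> st v \in X.
Proof. by move=> hv hX; apply: (Vof_N hv hX). Qed.

Lemma E1 k v (s : {ffun V -> V}) : s \in P0 -> v \in N -> v \in Vof (gS s) -> v \in X ->
  (#|V| <= k + dep v)%N -> (forall a, a \notin X -> th a = 0) ->
  expR (- \sum_(w in Sub v) (if w \in act :&: Vof (gS s) then th w else 0)) = Phi k v s.
Proof.
move=> hs; elim: k v => [|k IH] v hv hvs hvX hk hth.
  by have := dep_lt v; rewrite add0n in hk; rewrite ltnNge hk.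
have hsv := P0_C hs hv.
rewrite tree_sum (bigD1 (s v)) //= [X in _ + (_ + X)]big1 ?addr0; last first.
  move=> c /andP[hc cne]; apply: big1 => w hw; rewrite in_setI.
  case: (boolP (w \in Vof (gS s))) => hws; rewrite ?andbF //.
  have hcV : c \in Vof (gS s) by apply: (Vof_anc (goodS hs) hws); rewrite -SubE.
  have [_ h] := Vof_par (goodS hs) hcV (child_ne_r hc).
  by move: h; rewrite (childP hc) => /(_ hv) [e]; rewrite e eqxx in cne.
rewrite in_setI (negPf (N_not_act hv)) add0r /=.
case: ifP => [/eqP e|ne]; last first.
  rewrite big1 ?oppr0 ?expR0 // => w hw; case: ifP => // _; apply: hth.
  apply/negP => hwX; have hcX : s v \in X by apply: (Vof_anc (goodS hst) hwX); rewrite -SubE.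
  have [_ h] := Vof_par (goodS hst) hcX (child_ne_r hsv).
  move: h; rewrite (childP hsv) => /(_ hv) [e]; by rewrite e eqxx in ne.
rewrite e tree_sum; set b := st v.
have hbA : b \in act by apply: child_N hv _; rewrite /b -e.
have hbs : b \in Vof (gS s) by rewrite /b -e; exact: (Vof_N hv hvs).
have hbX : b \in X by exact: st_X_child.
rewrite in_setI hbA hbs /=.
rewrite (bigID (mem N)) /= [X in _ + (_ + X)]big1 ?addr0; last first.
  move=> u /andP[hu huN]; have := child_A hbA hu; rewrite (negPf huN) /= => hl.
  rewrite tree_sum (leaf_C hl) big_set0 addr0 in_setI (negPf (leaf_not_act hl)) //.
rewrite opprD expRD; congr (_ * _).
rewrite -sumrN expR_sum (eq_bigl (mem (C b :&: N))); last by move=> u; rewrite !inE.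
apply: eq_bigr => u /setIP[hu huN]; rewrite -IH //.
- exact: (Vof_A hbA hbs hu).
- exact: (Vof_A hbA hbX hu).
- rewrite (dep_child hu) (dep_child (P0_C hst hv)); move: hk; rewrite addSn; lia.
Qed.

Variables (d : V -> R) (eta gamma : R).
Hypothesis pisum : forall v, v \in N -> \sum_(a in C v) pi a = 1.
Hypothesis Hth : forall a, a \in X ->
  th a = eta * d a / (gamma * beta par r N R a + qpol par r N pi a).

Lemma E2 k v : v \in N -> v \in X ->
  ED pi N (Phi k v) = psiF par r N pi (reduce par r N st) d eta gamma k v (qpol par r N pi v).
Proof.
elim: k v => [|k IH] v hv hvX; first by rewrite /= (ED_const pisum).
set b := st v; have hb : b \in C v := P0_C hst hv.
have ebch : bch (reduce par r N st) v = b by rewrite /bch reduce_val.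
have hbA : b \in act by exact: child_N hv hb.
have hbX : b \in X by exact: st_X_child.
have eqb : qpol par r N pi b = pi b * qpol par r N pi v by rewrite (qpol_child _ hb) hbA.
have equ u : u \in C b :&: N -> qpol par r N pi u = pi b * qpol par r N pi v.
  move=> /setIP[hu huN]; rewrite (qpol_child _ hu) (negPf (N_not_act huN)) mul1r //.
rewrite /= ebch.
rewrite (@ED_ext _ pi _ (fun s => 1 + (if s v == b then 1 else 0) *
   (expR (- th b) * \prod_(u <- enum (C b :&: N)) Phi k u s - 1))); last first.
  move=> s /=; rewrite big_enum /=; rewrite -/b.
  by case: ifP => _; [rewrite mul1r addrC subrK | rewrite mul0r addr0].
rewrite ED_add (ED_const pisum) (ED_indep pisum (A := [set v])) //; first last.
- move=> s s' hs; congr (_ * _ - _); apply: eq_big_seq => u; rewrite mem_enum => hu.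
  have [hu1 huN] := setIP hu.
  apply: (Phi_dep _ huN) => w hw; apply: hs; rewrite in_set1; apply/eqP => e.
  move: hw; rewrite e => /(subsetP (Sub_child hu1)); apply/negP; exact: notin_Sub_child.
- by move=> s s' hs; rewrite hs ?in_set1.
rewrite (ED_ind pisum hv hb).
rewrite (ED_add pi (fun s => expR (- th b) * \prod_(u <- enum (C b :&: N)) Phi k u s) (fun=> -1)).
rewrite ED_scale (ED_const pisum) (ED_prod pisum); first last.
- move=> u u'; rewrite !mem_enum => /setIP[hu _] /setIP[hu' _] ne.
  apply/pred0P => w /=; apply/negP => /andP[w1 w2]; move/eqP: ne; apply.
  by apply: (Sub_disj _ w1 w2); rewrite (dep_child hu) (dep_child hu').
- by move=> u; rewrite mem_enum => /setIP[_ huN]; exact: Phi_dep.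
- exact: enum_uniq.
rewrite big_enum /=.
rewrite (eq_bigr (fun u => psiF par r N pi (reduce par r N st) d eta gamma k u (pi b * qpol par r N pi v))); last first.
  move=> u hu; have [hu1 huN] := setIP hu; rewrite IH //; first by rewrite equ.
  exact: (Vof_A hbA hbX hu1).
rewrite (Hth hbX) eqb -mulNr.
set e := expR _; set P := \prod_(i in _) _; ring.
Qed.

End Main.


Section RHS.
Variables (R : realType) (pi : V -> R) (th : V -> R).
Hypothesis pisum : forall v, v \in N -> \sum_(a in C v) pi a = 1.

Lemma img_act (s0 : {ffun V -> V}) : s0 \in P0 ->
  act :&: Vof (gS s0) = [set s0 x | x in N :&: Vof (gS s0)].
Proof.
move=> hs; apply/setP => a; apply/setIP/imsetP => [[hA hX]|[v /setIP[hv hX] ->]].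
  have [h1 h2] := Vof_par (goodS hs) hX (act_ne_r hA).
  have e := h2 (par_act hA); exists (par a); first by rewrite in_setI par_act.
  by case: e.
split; first exact: child_N hv (P0_C hs hv).
exact: Vof_N hv hX _.
Qed.

Lemma RHS_eq :
  \sum_(rho in reduced_strategies par r N)
     (\prod_(a in Aof par r N rho) pi a) * expR (- \sum_(a in Aof par r N rho) th a) =
  ED pi N (fun s => expR (- \sum_(a in act :&: Vof (gS s)) th a)).
Proof.
rewrite /ED (partition_big_imset (reduce par r N)) -S_eq /=.
apply: eq_bigr => rho; rewrite S_eq => /imsetP[s0 hs0 ->].
rewrite Aof_reduce.
rewrite (eq_bigr (fun s : {ffun V -> V} => (\prod_(w in N) pi (s w)) * expR (- \sum_(a in act :&: Vof (gS s0)) th a))); last first.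
  move=> s /andP[hs /eqP e]; congr (_ * expR (- _)).
  by rewrite -!Vof_reduce e.
rewrite -big_distrl /=; congr (_ * _); symmetry.
pose Q w := if w \in Vof (gS s0) then [set s0 w] else C w.
rewrite (eq_bigl (fun s : {ffun V -> V} => (s \in Fam N) && [forall w in N, s w \in Q w])); last first.
  move=> s; case: (boolP (s \in Fam N)) => //= hs; apply/eqP/forallP => [e w|h].
    apply/implyP => hw; rewrite /Q; case: ifP => hX.
      by rewrite in_set1; apply/eqP; apply/esym; move: e => /esym /reduce_eqP; apply.
    exact: P0_C.
  apply/esym/reduce_eqP => v hv hX; have := h v; rewrite hv /Q hX in_set1 => /eqP ->.
  by [].
rewrite famQ; last first.
  by move=> w hw; rewrite /Q; case: ifP => _; rewrite ?sub1set ?P0_C.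
rewrite [LHS](eq_bigr (fun w => if w \in Vof (gS s0) then pi (s0 w) else 1)); last first.
  by move=> w hw; rewrite /Q; case: ifP => _; rewrite ?big_set1 ?pisum.
rewrite -big_mkcondr /= (img_act hs0) big_imset /=; last first.
  move=> x y /setIP[hx _] /setIP[hy _] e.
  by rewrite -(childP (P0_C hs0 hx)) e (childP (P0_C hs0 hy)).
by apply: eq_bigl => w; rewrite in_setI.
Qed.
End RHS.


Section Policy.
Variable (R : realType).
Definition Inv (pi : V -> R) :=
  (forall a, a \in act -> 0 <= pi a) /\ (forall v, v \in N -> \sum_(a in C v) pi a = 1).

Lemma pos_aux (p z : R) : 0 <= p -> p <= 1 -> 0 < z -> 0 < 1 - (1 - z) * p.
Proof.
move=> p0 p1 z0; have zp : 0 <= z * p by rewrite mulr_ge0 // ltW.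
have [lt|ge] := ltrP p 1; first by nra.
have -> : p = 1 by apply/le_anti; rewrite p1 ge.
by rewrite mulr1 opprB addrC subrK.
Qed.

Lemma pi_le1 pi v a : Inv pi -> v \in N -> a \in C v -> pi a <= 1.
Proof.
move=> [h0 h1] hv ha; rewrite -(h1 _ hv) (bigD1 a) //= lerDl sumr_ge0 // => b /andP[hb _].
by apply: h0; exact: child_N hv hb.
Qed.

Lemma psi_pos pi (st : {ffun V -> V}) d eta gamma k u y : Inv pi -> st \in P0 ->
  u \in N -> u \in Vof (gS st) -> 0 < psiF par r N pi (reduce par r N st) d eta gamma k u y.
Proof.
move=> hI hst; elim: k u y => [//|k IH] u y hu hX /=.
have eb : bch (reduce par r N st) u = st u by rewrite /bch reduce_val.
have hb := P0_C hst hu.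
rewrite eb; apply: pos_aux.
- by apply: hI.1; exact: child_N hu hb.
- exact: pi_le1 hI hu hb.
apply: mulr_gt0; first exact: expR_gt0.
apply: prodr_gt0 => w /setIP[hw hwN]; apply: IH => //.
exact: Vof_A (child_N hu hb) (Vof_N hu hX _) hw.
Qed.

Lemma newpi_inv pi (st : {ffun V -> V}) d eta gamma : Inv pi -> st \in P0 ->
  Inv (newpi par r N pi (reduce par r N st) d eta gamma).
Proof.
move=> hI hst.
have key v : v \in N -> v \in Vof (gS st) ->
  let w := omega par r N pi (reduce par r N st) d eta gamma v (xcall par r pi v) in
  [/\ bch (reduce par r N st) v = st v, 0 < w &
      0 < 1 - (1 - w) * pi (st v)].
  move=> hv hX /=; have eb : bch (reduce par r N st) v = st v by rewrite /bch reduce_val.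
  have hb := P0_C hst hv.
  have wpos : 0 < omega par r N pi (reduce par r N st) d eta gamma v (xcall par r pi v).
    rewrite /omega eb; apply: mulr_gt0; first exact: expR_gt0.
    apply: prodr_gt0 => w /setIP[hw hwN]; apply: psi_pos => //.
    exact: Vof_A (child_N hv hb) (Vof_N hv hX _) hw.
  split => //; apply: pos_aux => //.
  - by apply: hI.1; exact: child_N hv hb.
  - exact: pi_le1 hI hv hb.
split.
  move=> a ha; rewrite /newpi ha Nof_reduce /=; case: ifP => [/setIP[hv hX]|_]; last exact: hI.1.
  have [eb wpos Dpos] := key _ hv hX; rewrite eb.
  apply: divr_ge0; last exact: ltW.
  by case: ifP => _; [apply: mulr_ge0; [exact: ltW | exact: hI.1] | exact: hI.1].
move=> v hv; case: (boolP (v \in Vof (gS st))) => hX; last first.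
  rewrite -(hI.2 _ hv); apply: eq_bigr => a ha; rewrite /newpi (childP ha) Nof_reduce in_setI hv.
  by rewrite (negPf hX) !andbF.
have [eb wpos Dpos] := key _ hv hX.
rewrite (eq_bigr (fun a => (if a == st v then
    omega par r N pi (reduce par r N st) d eta gamma v (xcall par r pi v) * pi a else pi a) /
    (1 - (1 - omega par r N pi (reduce par r N st) d eta gamma v (xcall par r pi v)) * pi (st v)))); last first.
  by move=> a ha; rewrite /newpi (childP ha) Nof_reduce in_setI hv hX (child_N hv ha) /= eb.
rewrite -mulr_suml (bigD1 (st v)) ?P0_C //= eqxx.
rewrite (eq_bigr pi); last by move=> a /andP[_ /negPf ->].
have : \sum_(a in C v | a != st v) pi a = 1 - pi (st v).
  by rewrite -(hI.2 _ hv) [in RHS](bigD1 (st v)) ?P0_C //=; ring.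
move=> ->; set w := omega _ _ _ _ _ _ _ _ _ _.
rewrite (_ : w * pi (st v) + (1 - pi (st v)) = 1 - (1 - w) * pi (st v)); last by ring.
by rewrite mulfV // gt_eqF.
Qed.

Local Notation nF := (nF par r N).
Lemma nF_stable k k' v : (#|V| - dep v <= k)%N -> (#|V| - dep v <= k')%N -> nF k v = nF k' v.
Proof.
elim: k k' v => [|k IH] [|k'] v hk hk'.
- by [].
- by have := dep_lt v; lia.
- by have := dep_lt v; lia.
rewrite /=; case: ifP => _.
  by apply: eq_bigr => u /setIP[hu _]; apply: IH; rewrite (dep_child hu); lia.
by apply: eq_bigr => u hu; apply: IH; rewrite (dep_child hu); lia.
Qed.

Lemma nF_pos k v : (v \in N) || (v \in act) -> (#|V| - dep v <= k)%N -> (0 < nF k v)%N.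
Proof.
elim: k v => [|k IH] v hv hk; first by have := dep_lt v; lia.
rewrite /=; case: ifP => hA.
  apply: prodn_cond_gt0 => u /setIP[hu huN]; apply: IH; first by rewrite huN.
  by rewrite (dep_child hu); lia.
have hvN : v \in N by move: hv; rewrite hA orbF.
have [h1 _] := HN hvN; have [a ha] : exists a, a \in C v.
  by apply/set0Pn; rewrite -card_gt0; apply: ltn_trans h1.
rewrite (bigD1 a) //= ltn_addr // IH ?(child_N hvN ha) ?orbT //.
by rewrite (dep_child ha); lia.
Qed.

Lemma nfun_N v : v \in N -> nfun par r N v = (\sum_(a in C v) nfun par r N a)%N.
Proof.
move=> hv; rewrite /nfun; have := dep_lt v; case e: #|V| => [|n] // _.
rewrite /= (negPf (N_not_act hv)); apply: eq_bigr => a ha.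
transitivity (nF n.+1 a); last by []. have hd := dep_lt v; have hc := dep_child ha; apply: nF_stable; lia.
Qed.

Lemma pi1_inv : Inv (pi1 par r N R).
Proof.
split.
  by move=> a ha; rewrite /pi1 divr_ge0 ?ler0n.
move=> v hv; rewrite (eq_bigr (fun a => (nfun par r N a)%:R / (nfun par r N v)%:R)); last first.
  by move=> a ha; rewrite /pi1 (childP ha).
rewrite -mulr_suml -natr_sum -nfun_N // mulfV // pnatr_eq0 -lt0n.
by apply: nF_pos; rewrite ?hv //; lia.
Qed.
End Policy.

End TreeFacts.

Unset Implicit Arguments.
Set Strict Implicit.

Theorem mainTheorem10 (V : finType) (par : V -> V) (r : V) (N : {set V})
  (R : realType) (lam : V -> R) (T : nat) (eps : R)
  (mu : nat -> {ffun V -> V}) (sig : nat -> {ffun V -> option V})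
  (phi : nat -> V -> R) (t : nat) :
  is_game_tree par r N ->
  (forall u, u \in leaves par r -> 0 <= lam u <= 1) ->
  0 < eps < 1 ->
  (forall s a, a \in actions par r N -> mu s a \in children par r a) ->
  (forall s, (1 <= s <= T)%N -> sig s \in reduced_strategies par r N) ->
  (1 <= t <= T)%N ->
  psi_root par r N lam T eps mu sig phi t =
  \sum_(s in reduced_strategies par r N)
     (\prod_(a in Aof par r N s) pi_t par r N lam T eps mu sig phi t a)
     * expR (- \sum_(a in Aof par r N s) theta par r N lam T eps mu sig phi t a).
Proof.
move=> Ht _ _ _ Hsig /andP[t1 tT].
have getst k : (1 <= k <= T)%N -> exists2 st, st \in Fam par r N & sig k = reduce par r N st.
  by move=> hk; have := Hsig k hk; rewrite S_eq => /imsetP[st hst ->]; exists st.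
have Hinv k : (k <= T)%N -> Inv par r N (polF par r N lam T eps mu sig phi k).
  elim: k => [_|k IH hk]; first exact: (pi1_inv Ht).
  have := getst k.+1; rewrite hk => /(_ isT) [st hst Est].
  by rewrite /= Est; apply: (newpi_inv Ht) => //; apply: IH; apply: ltnW.
set pi := pi_t par r N lam T eps mu sig phi t.
have HI : Inv par r N pi by apply: Hinv; apply: leq_trans (leq_pred t) tT.
have := getst t; rewrite t1 tT => /(_ isT) [st hst Est].
set th := theta par r N lam T eps mu sig phi t.
have Hth a : a \in Vof par r N (fun u => Some (st u)) -> th a =
    eta_dp par r N T eps * d_t par r N lam mu sig phi t a /
    (gamma_dp par r N T eps * beta par r N R a + qpol par r N pi a).
  by move=> ha; rewrite /th /theta Est Vof_reduce ha.
have Hth0 a : a \notin Vof par r N (fun u => Some (st u)) -> th a = 0.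
  by move=> ha; rewrite /th /theta Est Vof_reduce (negPf ha).
rewrite /psi_root -/pi Est.
have := E2 Ht hst HI.2 Hth (#|V|.+1) (r_in_N Ht) (Vof_r _ _ _ _); rewrite (qpol_r Ht) => <-.
rewrite (RHS_eq Ht th HI.2).
apply: eq_bigr => s hs; congr (_ * _).
rewrite -(E1 hst hs (r_in_N Ht) (Vof_r _ _ _ _) (Vof_r _ _ _ _)) ?(dep_r Ht) ?addn0 //.
congr (expR (- _)); rewrite [RHS]big_mkcond /=; apply: eq_bigl => w.
by rewrite SubE (anc_root Ht).
Qed.
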